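(* Let $A$ be a bounded set in a Banach space $X$. Then $\gamma_0(A)\le\operatorname{bs}(A)$.
   Context: $\gamma_0(A)=\sup\{|\lim_m\lim_n x_m^*(x_n)| : (x_m^* )\text{ a sequence in }B_{X^*}\text{ weak}^*\text{ converging to }0,\ (x_n)\text{ a sequence in }A,\text{ and all the involved limits exist}\}$, where $B_{X^*}$ is the closed unit ball of $X^*$. For a bounded sequence $(x_k)$: $\operatorname{ca}(x_k)=\inf_{n}\sup\{\|x_k-x_l\|: k,l\ge n\}$, $\operatorname{cca}(x_k)=\operatorname{ca}(\frac1k\sum_{i=1}^k x_i)$, $\widetilde{\operatorname{cca}}(x_k)=\inf\{\operatorname{cca}(x_{k_n}) : (x_{k_n})\text{ a subsequence of }(x_k)\}$, and $\operatorname{bs}(A)=\sup\{\widetilde{\operatorname{cca}}(x_k): (x_k)\subset A\}$. *)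

(* Defs.v *)
From HB Require Import structures.
From mathcomp Require Import all_boot all_order all_algebra.
From mathcomp Require Import all_classical all_reals all_analysis.
Set Implicit Arguments. Unset Strict Implicit. Unset Printing Implicit Defensive.
Import Order.TTheory GRing.Theory Num.Theory.
Import numFieldNormedType.Exports.
Local Open Scope classical_set_scope.
Local Open Scope ring_scope.

Section Defs.
Context {R : realType} {X : normedModType R}.

(* f is an element of the closed unit ball B_{X^*} of the (real) dual:
   a linear functional with |f x| <= ||x|| (hence continuous, norm <= 1). *)
Definition in_dual_ball (f : X -> R) : Prop :=
  (forall (a : R) (u v : X), f (a *: u + v) = a * f u + f v) /\
  (forall x : X, `|f x| <= `|x|).

Definition gamma0 (A : set X) : \bar R :=
  ereal_sup [set r : \bar R | exists (F : nat -> X -> R) (x : nat -> X),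
    [/\ (forall m, in_dual_ball (F m)),
        (forall y : X, (fun m => F m y) @ \oo --> (0 : R)),
        (forall n, A (x n)),
      (forall m, cvgn (fun n => F m (x n))) &
      cvgn (fun m => limn (fun n => F m (x n)))] /\
        r = (`| limn (fun m => limn (fun n => F m (x n))) |)%:E].

Definition ca (u : nat -> X) : \bar R :=
  ereal_inf [set s : \bar R | exists n : nat,
    s = ereal_sup [set t : \bar R | exists k l : nat,
          [/\ (n <= k)%N, (n <= l)%N & t = (`| u k - u l |)%:E]]].

(* Cesaro means: cesaro u k = (1/(k+1)) sum_{i=0}^{k} u i
   (the paper's (1/k) sum_{i=1}^k x_i with 0-based indexing). *)
Definition cesaro (u : nat -> X) (k : nat) : X :=
  (k.+1%:R)^-1 *: \sum_(i < k.+1) u i.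

Definition cca (u : nat -> X) : \bar R := ca (cesaro u).

Definition cca_tilde (u : nat -> X) : \bar R :=
  ereal_inf [set s : \bar R | exists phi : nat -> nat,
    (forall n, (phi n < phi n.+1)%N) /\ s = cca (u \o phi)].

Definition bs (A : set X) : \bar R :=
  ereal_sup [set s : \bar R | exists u : nat -> X,
    (forall k, A (u k)) /\ s = cca_tilde u].

End Defs.

(* Main.v *)
Require Import Defs.
From HB Require Import structures.
From mathcomp Require Import all_boot all_order all_algebra.
From mathcomp Require Import all_classical all_reals all_analysis.
From mathcomp Require Import ring lra.
Import Order.TTheory GRing.Theory Num.Theory.
Import numFieldNormedType.Exports.
Local Open Scope classical_set_scope.
Local Open Scope ring_scope.

Lemma seqP (R : realType) (u : nat -> R) l : u @ \oo --> l ->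
  forall e, 0 < e -> exists N, forall n, (N <= n)%N -> `|l - u n| < e.
Proof.
move=> /cvgrPdist_lt H e e0. have [N _ HN] := H e e0. by exists N => n /HN.
Qed.

Lemma seqP2 (R : realType) (u : nat -> R) l :
  (forall e, 0 < e -> exists N, forall n, (N <= n)%N -> `|l - u n| < e) -> u @ \oo --> l.
Proof.
move=> H; apply/cvgrPdist_lt => e e0. have [N HN] := H e e0. by exists N.
Qed.

Lemma phi_ge (phi : nat -> nat) : (forall n, (phi n < phi n.+1)%N) ->
  forall i, (i <= phi i)%N.
Proof.
move=> h; elim=> [|i IH] //. exact: leq_ltn_trans IH (h i).
Qed.

Section Lin.
Context {R : realType} {X : normedModType R} (f : X -> R)
  (hf : in_dual_ball f).

Lemma F0 : f 0 = 0.
Proof. by apply/eqP; rewrite -normr_le0 -(normr0 X); exact: hf.2. Qed.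

Lemma FD u v : f (u + v) = f u + f v.
Proof. by have := hf.1 1 u v; rewrite scale1r mul1r. Qed.

Lemma FZ a u : f (a *: u) = a * f u.
Proof. by have := hf.1 a u 0; rewrite !addr0 F0 addr0. Qed.

Lemma FB u v : f (u - v) = f u - f v.
Proof. by rewrite FD -scaleN1r FZ mulN1r. Qed.

Lemma Fces (y : nat -> X) k :
  f (Defs.cesaro y k) = arithmetic_mean (f \o y) k.
Proof.
rewrite /Defs.cesaro FZ /arithmetic_mean /series /=.
rewrite (big_morph f FD F0) big_mkord; done.
Qed.
End Lin.

Lemma key (R : realType) (X : normedModType R) (F : nat -> X -> R) (x : nat -> X)
  (hF : forall m, in_dual_ball (F m))
  (h0 : forall y : X, (fun m => F m y) @ \oo --> (0 : R))
  (hc : forall m, cvgn (fun n => F m (x n)))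
  (hL : cvgn (fun m => limn (fun n => F m (x n))))
  (phi : nat -> nat) (hphi : forall n, (phi n < phi n.+1)%N) (n : nat) :
  ((`| limn (fun m => limn (fun n => F m (x n))) |)%:E <=
  ereal_sup [set t : \bar R | exists k l : nat,
          [/\ (n <= k)%N, (n <= l)%N & t = (`| Defs.cesaro (x \o phi) k - Defs.cesaro (x \o phi) l |)%:E]])%E.
Proof.
set a := fun m => limn (fun n => F m (x n)).
set L := limn a.
set c := Defs.cesaro (x \o phi).
apply/lee_subgt0Pr => e e0.
have e30 : 0 < e / 3 by lra.
have [M2 HM2] := @seqP _ _ _ hL _ e30.
have [M1 HM1] := @seqP _ _ _ (h0 (c n)) _ e30.
set m := maxn M1 M2.
have hv : (fun i => F m (x (phi i))) @ \oo --> a m.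
  apply: seqP2 => e' e'0.
  have [N HN] := @seqP _ _ _ (hc m) _ e'0.
  exists N => i hi; apply: HN; exact: leq_trans hi (@phi_ge _ hphi i).
have hw : (fun k => F m (c k)) @ \oo --> a m.
  have -> : (fun k => F m (c k)) = arithmetic_mean (fun i => F m (x (phi i))).
    by apply: funext => k; rewrite /c (Fces _ (hF m)).
  exact: sequences.cesaro.
have [N HN] := @seqP _ _ _ hw _ e30.
set l := maxn n N.
apply: le_ereal_sup_tmp; exists (`|c l - c n|)%:E.
  by exists l, n; split => //; rewrite leq_maxl.
rewrite -EFinB lee_fin.
have h1 := HM2 m (leq_maxr _ _).
have h2 := HM1 m (leq_maxl _ _).
have h3 := HN l (leq_maxr _ _).
have h4 := (hF m).2 (c l - c n).
rewrite (FB _ (hF m)) in h4.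
rewrite sub0r normrN in h2.
move: h1 h2 h3 h4.
set p := F m (c l); set q := F m (c n); set am := a m.
move=> h1 h2 h3 h4.
have E : L = (L - am) + (am - p) + (p - q) + q by ring.
have T : `|L| <= `|L - am| + `|am - p| + `|p - q| + `|q|.
  rewrite {1}E; apply: (le_trans (ler_normD _ _)); rewrite lerD2r.
  apply: (le_trans (ler_normD _ _)); rewrite lerD2r.
  exact: ler_normD.
lra.
Qed.

Theorem lemma3p5 (R : realType) (X : completeNormedModType R) (A : set X)
  (hA : exists M : R, forall x : X, A x -> `|x| <= M) :
  (gamma0 A <= bs A)%E.
Proof.
apply: ge_ereal_sup => r [F [x [[hF h0 hAx hc hL] ->]]].
apply: (@le_trans _ _ (cca_tilde x)); last first.
  by apply: ereal_sup_ubound; exists x.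
apply: le_ereal_inf_tmp => s [phi [hphi ->]].
apply: le_ereal_inf_tmp => t [n ->].
exact: key.
Qed.
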